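(* Let $a=1$, $b=-1$. For all $(J,E)\in D_1$ one has $\frac{\partial T}{\partial E}(J,E)>0$ and $\frac{\partial T}{\partial J}(J,E)<0$.
   Context: With $a=1$, $b=-1$, let $V_J(r)=\frac{J^2}{2r^2}+\frac{r^2}{2}-\frac{r^4}{4}$. For $0<J<\sqrt{4/27}$ write $J=q(1-q^2)=Q(1-Q^2)$ with $0<q<1/\sqrt3<Q<1$, and set $E_-(J)=\frac14(1-Q^2)(3Q^2+1)$, $E_+(J)=\frac14(1-q^2)(3q^2+1)$. Let $D_1=\{(J,E):0<J<\sqrt{4/27},\ E_-(J)<E<E_+(J)\}$. For $(J,E)\in D_1$, let $r_1<r_2<r_3$ be the positive roots of $E-V_J(r)$ and define $T(J,E)=2\int_{r_1}^{r_2}\frac{dr}{\sqrt{2(E-V_J(r))}}$ (the period of the modulus of the solution of $u_{xx}+u-|u|^2u=0$ with $\operatorname{Im}(u\bar u_x)=J$ and $\frac12|u_x|^2+\frac12|u|^2-\frac14|u|^4=E$). *)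

(* Defs.v *)
From Stdlib Require Import Reals Lra ClassicalEpsilon.
From Coquelicot Require Import Coquelicot.
Open Scope R_scope.

(* Effective potential with a = 1, b = -1. *)
Definition V (J r : R) : R := J ^ 2 / (2 * r ^ 2) + r ^ 2 / 2 - r ^ 4 / 4.

(* E_-(J) = 1/4 (1-Q^2)(3Q^2+1), E_+(J) = 1/4 (1-q^2)(3q^2+1) as functions of Q, q. *)
Definition Eq (x : R) : R := / 4 * (1 - x ^ 2) * (3 * x ^ 2 + 1).

Definition D1 (J E : R) : Prop :=
  0 < J < sqrt (4 / 27) /\
  exists q Q : R,
    0 < q < / sqrt 3 /\ / sqrt 3 < Q < 1 /\
    J = q * (1 - q ^ 2) /\ J = Q * (1 - Q ^ 2) /\
    Eq Q < E < Eq q.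

Definition root_triple (J E : R) (t : R * R * R) : Prop :=
  let '(r1, r2, r3) := t in
  0 < r1 < r2 /\ r2 < r3 /\
  E - V J r1 = 0 /\ E - V J r2 = 0 /\ E - V J r3 = 0 /\
  (forall r, 0 < r -> E - V J r = 0 -> r = r1 \/ r = r2 \/ r = r3).

Definition roots (J E : R) : R * R * R :=
  epsilon (inhabits (0, 0, 0)) (root_triple J E).

Definition T (J E : R) : R :=
  let '(r1, r2, _) := roots J E in
  2 * RInt_gen (fun r => / sqrt (2 * (E - V J r))) (at_right r1) (at_left r2).

(* Main.v *)
Require Import Defs.
From Stdlib Require Import Reals Lra Psatz ClassicalEpsilon.
From Coquelicot Require Import Coquelicot.
Open Scope R_scope.

Definition Pc (b c s : R) : R := s ^ 3 - 2 * s ^ 2 + b * s - c.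
Definition dPc (b s : R) : R := 3 * s ^ 2 - 4 * s + b.

Lemma EV_eq J E r : 0 < r -> E - V J r = Pc (4 * E) (2 * J ^ 2) (r ^ 2) / (4 * r ^ 2).
Proof. intros. unfold V, Pc. field. lra. Qed.

Lemma mul_eq0_r a b : a <> 0 -> a * b = 0 -> b = 0.
Proof. intros Ha H. destruct (Rmult_integral _ _ H); [contradiction|auto]. Qed.

Definition is_triple (b c s1 s2 s3 : R) : Prop :=
  0 < s1 /\ s1 < s2 /\ s2 < s3 /\ Pc b c s1 = 0 /\ Pc b c s2 = 0 /\ Pc b c s3 = 0.

Lemma triple_vieta b c s1 s2 s3 : is_triple b c s1 s2 s3 ->
  s1 + s2 + s3 = 2 /\ b = s1 * s2 + s1 * s3 + s2 * s3 /\ c = s1 * s2 * s3.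
Proof.
  intros (H0 & H12 & H23 & P1 & P2 & P3). unfold Pc in *.
  assert (A: s1^2 + s1*s2 + s2^2 - 2*(s1+s2) + b = 0).
  { apply (mul_eq0_r (s2 - s1)). lra. transitivity (Pc b c s2 - Pc b c s1).
    unfold Pc; ring. unfold Pc; lra. }
  assert (B: s1^2 + s1*s3 + s3^2 - 2*(s1+s3) + b = 0).
  { apply (mul_eq0_r (s3 - s1)). lra. transitivity (Pc b c s3 - Pc b c s1).
    unfold Pc; ring. unfold Pc; lra. }
  assert (C: s1 + s2 + s3 = 2).
  { assert (s1 + s2 + s3 - 2 = 0); [|lra].
    apply (mul_eq0_r (s3 - s2)). lra. lra. }
  split; [auto|]. split; [nra|]. nra.
Qed.

Lemma triple_factor b c s1 s2 s3 : is_triple b c s1 s2 s3 ->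
  forall s, Pc b c s = (s - s1) * (s - s2) * (s - s3).
Proof.
  intros H s. destruct (triple_vieta _ _ _ _ _ H) as (A & B & C).
  unfold Pc. subst b c. replace 2 with (s1+s2+s3) at 1 by lra. ring.
Qed.

Lemma triple_dP b c s1 s2 s3 : is_triple b c s1 s2 s3 ->
  dPc b s1 = (s1 - s2) * (s1 - s3) /\ dPc b s2 = (s2 - s1) * (s2 - s3) /\
  dPc b s3 = (s3 - s1) * (s3 - s2).
Proof.
  intros H. destruct (triple_vieta _ _ _ _ _ H) as (A & B & C).
  unfold dPc. subst b. replace 4 with (2*(s1+s2+s3)) by lra.
  repeat split; ring.
Qed.

Lemma sqrt_pos_lt x : 0 < x -> 0 < sqrt x.
Proof. apply sqrt_lt_R0. Qed.

Lemma sqrt_sq2 x : 0 <= x -> sqrt x ^ 2 = x.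
Proof. intros. simpl. rewrite Rmult_1_r. apply sqrt_sqrt. auto. Qed.

Lemma root_of_sq r s : 0 < r -> 0 <= s -> r ^ 2 = s -> r = sqrt s.
Proof. intros Hr Hs H. subst s. simpl. rewrite Rmult_1_r. rewrite sqrt_square; lra. Qed.

Lemma root_triple_of J E s1 s2 s3 : is_triple (4 * E) (2 * J ^ 2) s1 s2 s3 ->
  root_triple J E (sqrt s1, sqrt s2, sqrt s3).
Proof.
  intros H. pose proof H as (H0 & H12 & H23 & P1 & P2 & P3).
  simpl. 
  assert (L1: 0 < sqrt s1) by (apply sqrt_pos_lt; lra).
  assert (L2: sqrt s1 < sqrt s2) by (apply sqrt_lt_1; lra).
  assert (L3: sqrt s2 < sqrt s3) by (apply sqrt_lt_1; lra).
  assert (R: forall s, 0 < s -> Pc (4*E) (2*J^2) s = 0 -> E - V J (sqrt s) = 0).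
  { intros s Hs Hp. rewrite EV_eq by (apply sqrt_pos_lt; lra).
    rewrite sqrt_sq2 by lra. rewrite Hp. unfold Rdiv. ring. }
  repeat split; try lra; try (apply R; lra).
  intros r Hr Hv. rewrite EV_eq in Hv by lra.
  assert (Hp: Pc (4*E) (2*J^2) (r^2) = 0).
  { assert (0 < 4 * r^2) by nra.
    apply (mul_eq0_r (/ (4 * r^2))). apply Rinv_neq_0_compat. lra.
    rewrite <- Hv. unfold Rdiv. ring. }
  rewrite (triple_factor _ _ _ _ _ H) in Hp.
  destruct (Rmult_integral _ _ Hp) as [Hq|Hq].
  destruct (Rmult_integral _ _ Hq) as [Hq'|Hq'].
  - left. apply root_of_sq; lra.
  - right; left. apply root_of_sq; lra.
  - right; right. apply root_of_sq; lra.
Qed.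

Lemma roots_eq J E s1 s2 s3 : is_triple (4 * E) (2 * J ^ 2) s1 s2 s3 ->
  roots J E = (sqrt s1, sqrt s2, sqrt s3).
Proof.
  intros H. pose proof (root_triple_of _ _ _ _ _ H) as Ht.
  assert (Hs: root_triple J E (roots J E)).
  { unfold roots. apply epsilon_spec. exists (sqrt s1, sqrt s2, sqrt s3); exact Ht. }
  destruct (roots J E) as [[a1 a2] a3].
  simpl in Hs, Ht.
  destruct Ht as ((L0 & L1) & L2 & _ & _ & _ & U).
  destruct Hs as ((M0 & M1) & M2 & E1 & E2 & E3 & _).
  assert (A1 := U a1 ltac:(lra) E1).
  assert (A2 := U a2 ltac:(lra) E2).
  assert (A3 := U a3 ltac:(lra) E3).
  f_equal; [f_equal|]; lra.
Qed.

Lemma Pc_cont b c : continuity (Pc b c).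
Proof. intro x. apply continuity_pt_filterlim. apply (ex_derive_continuous (V:=R_NormedModule)).
  unfold Pc. auto_derive. auto. Qed.

Lemma ivt_up b c lo hi : lo < hi -> Pc b c lo < 0 -> 0 < Pc b c hi ->
  exists s, lo < s < hi /\ Pc b c s = 0.
Proof.
  intros H1 H2 H3. destruct (IVT (Pc b c) lo hi (Pc_cont b c) H1 H2 H3) as [z [Hz Hz']].
  exists z. split; auto. split.
  destruct (Req_dec lo z); [subst; lra|lra].
  destruct (Req_dec z hi); [subst; lra|lra].
Qed.

Lemma ivt_down b c lo hi : lo < hi -> 0 < Pc b c lo -> Pc b c hi < 0 ->
  exists s, lo < s < hi /\ Pc b c s = 0.
Proof.
  intros H1 H2 H3.
  assert (C: continuity (fun s => - Pc b c s)) by (apply continuity_opp, Pc_cont).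
  destruct (IVT (fun s => - Pc b c s) lo hi C H1 ltac:(lra) ltac:(lra)) as [z [Hz Hz']].
  exists z. split; [|lra]. split.
  destruct (Req_dec lo z); [subst; lra|lra].
  destruct (Req_dec z hi); [subst; lra|lra].
Qed.

Lemma D1_triple J E : D1 J E -> exists s1 s2 s3, is_triple (4 * E) (2 * J ^ 2) s1 s2 s3.
Proof.
  intros [HJ [q [Q (Hq & HQ & Jq & JQ & HE)]]].
  assert (Hs3: 0 < sqrt 3) by (apply sqrt_pos_lt; lra).
  assert (Hi: 0 < / sqrt 3) by (apply Rinv_0_lt_compat; lra).
  assert (x3: sqrt 3 * sqrt 3 = 3) by (apply sqrt_sqrt; lra).
  assert (Hqq: q < Q) by lra.
  assert (HQ1: Q < 1) by lra.
  unfold Eq in HE.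
  set (x := 1 - Q^2). set (y := 1 - q^2).
  assert (Hx: 0 < x) by (unfold x; nra).
  assert (Hxy: x < y) by (unfold x, y; nra).
  assert (Hy: y < 2) by (unfold y; nra).
  assert (P0: Pc (4*E) (2*J^2) 0 < 0).
  { unfold Pc. assert (0 < J) by lra. nra. }
  assert (Px: 0 < Pc (4*E) (2*J^2) x).
  { unfold Pc. rewrite JQ. unfold x. 
    assert (Pc (4 * E) (2 * (Q * (1 - Q ^ 2)) ^ 2) (1 - Q ^ 2)
        = 4 * (1 - Q^2) * (E - / 4 * (1 - Q ^ 2) * (3 * Q ^ 2 + 1))) by (unfold Pc; field).
    unfold Pc in H. rewrite H. apply Rmult_lt_0_compat. fold x; lra. lra. }
  assert (Py: Pc (4*E) (2*J^2) y < 0).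
  { unfold Pc. rewrite Jq. unfold y.
    assert (Pc (4 * E) (2 * (q * (1 - q ^ 2)) ^ 2) (1 - q ^ 2)
        = 4 * (1 - q^2) * (E - / 4 * (1 - q ^ 2) * (3 * q ^ 2 + 1))) by (unfold Pc; field).
    unfold Pc in H. rewrite H. fold y.
    assert (0 < 4 * y) by lra.
    pose proof (Rmult_lt_0_compat (4*y) (-(E - / 4 * (1 - q ^ 2) * (3 * q ^ 2 + 1))) ltac:(lra) ltac:(lra)).
    unfold y in *. lra. }
  assert (P2: 0 < Pc (4*E) (2*J^2) 2).
  { unfold Pc. rewrite JQ.
    assert (0 < / 4 * (1 - Q ^ 2) * (3 * Q ^ 2 + 1) - / 4 * (Q * (1 - Q ^ 2)) ^ 2).
    { assert (0 < 1 - Q^2) by nra.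
      replace (/ 4 * (1 - Q ^ 2) * (3 * Q ^ 2 + 1) - / 4 * (Q * (1 - Q ^ 2)) ^ 2)
        with (/4 * (1 - Q^2) * (3 * Q^2 + 1 - Q^2 * (1 - Q^2))) by ring.
      apply Rmult_lt_0_compat. lra. nra. }
    nra. }
  destruct (ivt_up _ _ 0 x Hx P0 Px) as [s1 [H1 E1]].
  destruct (ivt_down _ _ x y Hxy Px Py) as [s2 [H2 E2]].
  destruct (ivt_up _ _ y 2 Hy Py P2) as [s3 [H3 E3]].
  exists s1, s2, s3. unfold is_triple. repeat split; lra.
Qed.

Definition Dth (s1 s2 s3 t : R) : R := s3 - s1 * cos t ^ 2 - s2 * sin t ^ 2.
Definition hth (s1 s2 s3 t : R) : R := / sqrt (Dth s1 s2 s3 t).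
Definition Ith (s1 s2 s3 : R) : R := RInt (hth s1 s2 s3) 0 (PI / 2).

Lemma sc1 t : sin t ^ 2 + cos t ^ 2 = 1.
Proof. pose proof (sin2_cos2 t). unfold Rsqr in H. simpl. lra. Qed.

Lemma D_bounds s1 s2 s3 t : 0 < s1 -> s1 < s2 -> s2 < s3 ->
  s3 - s2 <= Dth s1 s2 s3 t <= s3 - s1.
Proof.
  intros. unfold Dth. pose proof (sc1 t).
  assert (0 <= sin t ^ 2) by (apply pow2_ge_0).
  assert (0 <= cos t ^ 2) by (apply pow2_ge_0). nra.
Qed.

Lemma cont_of_derive (f : R -> R) x : ex_derive f x -> continuous f x.
Proof. intros. apply (ex_derive_continuous (V:=R_NormedModule)). auto. Qed.

Lemma hth_cont s1 s2 s3 t : 0 < s1 -> s1 < s2 -> s2 < s3 -> continuous (hth s1 s2 s3) t.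
Proof.
  intros. apply cont_of_derive. unfold hth, Dth.
  pose proof (D_bounds s1 s2 s3 t H H0 H1). unfold Dth in H2.
  auto_derive. split. lra. split; auto.
  apply Rgt_not_eq. apply sqrt_lt_R0. lra.
Qed.

Lemma hth_ex_RInt s1 s2 s3 a b : 0 < s1 -> s1 < s2 -> s2 < s3 -> ex_RInt (hth s1 s2 s3) a b.
Proof. intros. apply (ex_RInt_continuous (V:=R_CompleteNormedModule)). intros. apply hth_cont; auto. Qed.

Lemma hth_bound s1 s2 s3 t : 0 < s1 -> s1 < s2 -> s2 < s3 ->
  0 < hth s1 s2 s3 t <= / sqrt (s3 - s2).
Proof.
  intros. pose proof (D_bounds s1 s2 s3 t H H0 H1). unfold hth.
  assert (0 < sqrt (s3 - s2)) by (apply sqrt_lt_R0; lra).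
  assert (sqrt (s3 - s2) <= sqrt (Dth s1 s2 s3 t)) by (apply sqrt_le_1; lra).
  split. apply Rinv_0_lt_compat. lra.
  apply Rinv_le_contravar; lra.
Qed.

Lemma abs_RInt_h s1 s2 s3 a b : 0 < s1 -> s1 < s2 -> s2 < s3 ->
  Rabs (RInt (hth s1 s2 s3) a b) <= / sqrt (s3 - s2) * Rabs (b - a).
Proof.
  intros. destruct (Rle_or_lt a b).
  - rewrite (Rabs_right (b - a)) by lra. rewrite Rmult_comm.
    apply abs_RInt_le_const; auto. apply hth_ex_RInt; auto.
    intros. pose proof (hth_bound s1 s2 s3 t H H0 H1). rewrite Rabs_right; lra.
  - rewrite <- opp_RInt_swap by (apply hth_ex_RInt; auto).
    unfold opp; simpl. rewrite Rabs_Ropp.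
    rewrite (Rabs_left (b - a)) by lra. replace (- (b - a)) with (a - b) by ring.
    rewrite Rmult_comm.
    apply abs_RInt_le_const; auto. lra. apply hth_ex_RInt; auto.
    intros. pose proof (hth_bound s1 s2 s3 t H H0 H1). rewrite Rabs_right; lra.
Qed.

Lemma le_3sin y : 0 <= y <= PI / 2 -> y <= 3 * sin y.
Proof.
  intros Hy. pose proof PI_4. 
  assert (Hp: 0 <= y <= PI) by lra.
  destruct (SIN y (proj1 Hp) (proj2 Hp)) as [H1 _].
  assert (E: sin_lb y = y - y * (y*y) / 6 + y * (y*y) * (y*y) / 120 - y * (y*y) * (y*y) * (y*y) / 5040).
  { unfold sin_lb, sin_approx, sin_term. simpl. field. }
  rewrite E in H1.
  assert (y <= 2) by lra.
  assert (y * y <= 4) by nra.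
  set (z := y*y) in *.
  assert (0 <= z) by (unfold z; nra).
  assert (0 <= y * z * z * (1/120 - z / 5040)).
  { apply Rmult_le_pos. apply Rmult_le_pos. apply Rmult_le_pos; lra. lra. lra. }
  assert (0 <= y * (2/3 - z / 6)) by (apply Rmult_le_pos; lra).
  nra.
Qed.

Section Sub.
Variables (J E s1 s2 s3 : R).
Hypothesis HT : is_triple (4 * E) (2 * J ^ 2) s1 s2 s3.

Definition uu t := s1 * cos t ^ 2 + s2 * sin t ^ 2.
Definition phi t := sqrt (uu t).
Definition dphi t := (s2 - s1) * sin t * cos t / phi t.
Definition gg r := / sqrt (2 * (E - V J r)).

Let H0 : 0 < s1. Proof. apply HT. Qed.
Let H12 : s1 < s2. Proof. apply HT. Qed.
Let H23 : s2 < s3. Proof. apply HT. Qed.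

Lemma uu_pos t : s1 <= uu t <= s2.
Proof. unfold uu. pose proof (sc1 t).
  assert (0 <= sin t ^ 2) by (apply pow2_ge_0).
  assert (0 <= cos t ^ 2) by (apply pow2_ge_0). nra. Qed.

Lemma phi_pos t : 0 < phi t.
Proof. unfold phi. apply sqrt_lt_R0. pose proof (uu_pos t). lra. Qed.

Lemma phi_deriv t : is_derive phi t (dphi t).
Proof.
  unfold phi, dphi, uu. pose proof (uu_pos t). unfold uu in H.
  auto_derive. lra.
  change (s1 * (cos t * (cos t * 1)) + s2 * (sin t * (sin t * 1))) with (uu t).
  change (sqrt (uu t)) with (phi t). pose proof (phi_pos t).
  field. lra.
Qed.

Lemma dphi_cont t : continuous dphi t.
Proof.
  apply cont_of_derive. unfold dphi, phi, uu. pose proof (uu_pos t). unfold uu in H.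
  auto_derive. split. lra. split; auto. apply Rgt_not_eq. apply sqrt_lt_R0. lra.
Qed.

Lemma sq_inj x y : 0 <= x -> 0 <= y -> x ^ 2 = y ^ 2 -> x = y.
Proof. intros. nra. Qed.

Lemma EV_phi t : E - V J (phi t) =
  (s2 - s1) ^ 2 * sin t ^ 2 * cos t ^ 2 * Dth s1 s2 s3 t / (4 * uu t).
Proof.
  rewrite EV_eq by apply phi_pos. unfold phi. rewrite sqrt_sq2 by (pose proof (uu_pos t); lra).
  rewrite (triple_factor _ _ _ _ _ HT). pose proof (uu_pos t).
  unfold uu, Dth. pose proof (sc1 t). 
  replace (cos t ^ 2) with (1 - sin t ^ 2) by lra. field. unfold uu in H. assert (cos t ^ 2 = 1 - sin t ^ 2) as H2 by lra. rewrite H2 in H. lra.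
Qed.

Lemma EV_phi_pos t : 0 < t < PI / 2 -> 0 < E - V J (phi t).
Proof.
  intros Ht. rewrite EV_phi. 
  assert (0 < sin t) by (apply sin_gt_0; lra).
  assert (0 < cos t) by (apply cos_gt_0; lra).
  pose proof (D_bounds s1 s2 s3 t H0 H12 H23). pose proof (uu_pos t).
  apply Rdiv_lt_0_compat; [|lra].
  repeat apply Rmult_lt_0_compat; try lra; apply pow_lt; lra.
Qed.

Lemma key_id t : 0 < t < PI / 2 -> dphi t * gg (phi t) = sqrt 2 * hth s1 s2 s3 t.
Proof.
  intros Ht.
  assert (Hs: 0 < sin t) by (apply sin_gt_0; lra).
  assert (Hc: 0 < cos t) by (apply cos_gt_0; lra).
  pose proof (D_bounds s1 s2 s3 t H0 H12 H23). pose proof (uu_pos t).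
  pose proof (EV_phi_pos t Ht).
  assert (Hp: 0 < phi t) by apply phi_pos.
  assert (Hd: 0 < dphi t).
  { unfold dphi. apply Rdiv_lt_0_compat; auto. repeat apply Rmult_lt_0_compat; lra. }
  assert (Hg: 0 < gg (phi t)).
  { unfold gg. apply Rinv_0_lt_compat, sqrt_lt_R0. lra. }
  assert (Hh: 0 < hth s1 s2 s3 t) by (apply hth_bound; auto).
  assert (Hs2: 0 < sqrt 2) by (apply sqrt_lt_R0; lra).
  apply sq_inj. nra. nra.
  rewrite !Rpow_mult_distr. unfold gg, hth.
  rewrite !pow_inv. rewrite !sqrt_sq2 by lra.
  rewrite EV_phi. unfold dphi. unfold Rdiv. rewrite !Rpow_mult_distr. rewrite pow_inv.
  unfold phi. rewrite sqrt_sq2 by lra.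
  field. repeat split; try lra.
Qed.

Lemma gg_cont r : 0 < r -> 0 < E - V J r -> continuous gg r.
Proof.
  intros Hr He. apply cont_of_derive. unfold gg. unfold V in *.
  auto_derive. simpl in He. repeat split. nra. lra. apply Rgt_not_eq, sqrt_lt_R0. lra.
Qed.

Lemma EV_pos_mid r : sqrt s1 < r < sqrt s2 -> 0 < r /\ 0 < E - V J r.
Proof.
  intros Hr. assert (0 <= sqrt s1) by apply sqrt_pos.
  assert (q1: sqrt s1 ^ 2 = s1) by (apply sqrt_sq2; lra).
  assert (q2: sqrt s2 ^ 2 = s2) by (apply sqrt_sq2; lra).
  assert (s1 < r ^ 2) by nra.
  assert (r ^ 2 < s2) by nra.
  split. lra.
  rewrite EV_eq by lra. rewrite (triple_factor _ _ _ _ _ HT).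
  apply Rdiv_lt_0_compat; [|nra].
  assert (0 < (r^2 - s1) * (s2 - r^2)) by nra.
  assert (0 < s3 - r^2) by lra. nra.
Qed.

Definition xa a := (a ^ 2 - s1) / (s2 - s1).
Definition theta a := asin (sqrt (xa a)).

Lemma theta_props a : sqrt s1 < a < sqrt s2 ->
  0 < theta a < PI / 2 /\ phi (theta a) = a /\ 
  sin (theta a) = sqrt (xa a) /\ cos (theta a) = sqrt (1 - xa a).
Proof.
  intros Ha. assert (0 <= sqrt s1) by apply sqrt_pos.
  assert (q1: sqrt s1 ^ 2 = s1) by (apply sqrt_sq2; lra).
  assert (q2: sqrt s2 ^ 2 = s2) by (apply sqrt_sq2; lra).
  assert (s1 < a ^ 2) by nra.
  assert (a ^ 2 < s2) by nra.
  assert (Hx: 0 < xa a < 1).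
  { unfold xa. split. apply Rdiv_lt_0_compat; lra.
    apply (Rmult_lt_reg_r (s2 - s1)). lra. unfold Rdiv. rewrite Rmult_assoc, Rinv_l; lra. }
  set (w := sqrt (xa a)).
  assert (Hw: 0 < w < 1).
  { unfold w. split. apply sqrt_lt_R0; lra. rewrite <- sqrt_1. apply sqrt_lt_1; lra. }
  assert (Hw2: w ^ 2 = xa a) by (unfold w; apply sqrt_sq2; lra).
  assert (Hsin: sin (theta a) = w) by (unfold theta; apply sin_asin; fold w; lra).
  assert (Hcos: cos (theta a) = sqrt (1 - xa a)).
  { unfold theta. rewrite cos_asin by (fold w; lra). fold w. unfold Rsqr. 
    f_equal. simpl in Hw2. lra. }
  pose proof (asin_bound_lt w ltac:(lra)) as Hb. change (asin w) with (theta a) in Hb. 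
  assert (Hpos: 0 < theta a).
  { destruct (Rlt_or_le 0 (theta a)) as [h|h]; auto.
    pose proof PI_RGT_0. pose proof (sin_ge_0 (- theta a) ltac:(lra) ltac:(lra)). rewrite sin_neg in H4. lra. }
  split; [lra|]. split; [|split; auto].
  unfold phi, uu. rewrite Hsin, Hcos. rewrite sqrt_sq2 by lra. rewrite Hw2.
  replace (s1 * (1 - xa a) + s2 * xa a) with (a ^ 2).
  simpl. rewrite Rmult_1_r. apply sqrt_square. lra.
  unfold xa. field. lra.
Qed.

Lemma is_RInt_mid a b : sqrt s1 < a < sqrt s2 -> sqrt s1 < b < sqrt s2 ->
  is_RInt gg a b (sqrt 2 * RInt (hth s1 s2 s3) (theta a) (theta b)).
Proof.
  intros Ha Hb.
  destruct (theta_props a Ha) as (Ta & Pa & _).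
  destruct (theta_props b Hb) as (Tb & Pb & _).
  assert (C: is_RInt (fun y => scal (dphi y) (gg (phi y))) (theta a) (theta b)
               (RInt gg (phi (theta a)) (phi (theta b)))).
  { apply (is_RInt_comp (V:=R_CompleteNormedModule)).
    - intros x Hx. assert (0 < x < PI/2).
      { split. apply (Rlt_le_trans _ (Rmin (theta a) (theta b))). apply Rmin_glb_lt; lra. lra.
        apply (Rle_lt_trans _ (Rmax (theta a) (theta b))). lra. apply Rmax_lub_lt; lra. }
      apply gg_cont. apply phi_pos. apply EV_phi_pos. auto.
    - intros x _. split. apply phi_deriv. apply dphi_cont. }
  rewrite Pa, Pb in C.
  assert (C2: is_RInt (fun y => sqrt 2 * hth s1 s2 s3 y) (theta a) (theta b) (RInt gg a b)).
  { apply (is_RInt_ext (V:=R_NormedModule)) with (2 := C).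
    intros x Hx. assert (0 < x < PI/2).
      { split. apply (Rlt_trans _ (Rmin (theta a) (theta b))). apply Rmin_glb_lt; lra. lra.
        apply (Rlt_trans _ (Rmax (theta a) (theta b))). lra. apply Rmax_lub_lt; lra. }
    rewrite <- key_id by auto. reflexivity. }
  assert (C3: is_RInt (fun y => sqrt 2 * hth s1 s2 s3 y) (theta a) (theta b)
                 (sqrt 2 * RInt (hth s1 s2 s3) (theta a) (theta b))).
  { apply (is_RInt_scal (V:=R_NormedModule) (hth s1 s2 s3) (theta a) (theta b) (sqrt 2)).
    apply (RInt_correct (V:=R_CompleteNormedModule)). apply hth_ex_RInt; auto. }
  assert (Eqn: RInt gg a b = sqrt 2 * RInt (hth s1 s2 s3) (theta a) (theta b)).
  { rewrite <- (is_RInt_unique _ _ _ _ C2). apply (is_RInt_unique _ _ _ _ C3). }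
  rewrite <- Eqn. apply (RInt_correct (V:=R_CompleteNormedModule)).
  apply (ex_RInt_continuous (V:=R_CompleteNormedModule)). intros z Hz.
  assert (sqrt s1 < z < sqrt s2).
  { split. apply (Rlt_le_trans _ (Rmin a b)). apply Rmin_glb_lt; lra. lra.
    apply (Rle_lt_trans _ (Rmax a b)). lra. apply Rmax_lub_lt; lra. }
  destruct (EV_pos_mid z H) as [Hz1 Hz2]. apply gg_cont; auto.
Qed.

Lemma theta_lo a : sqrt s1 < a < sqrt s2 -> theta a <= 3 * sqrt (xa a).
Proof.
  intros Ha. destruct (theta_props a Ha) as (T1 & _ & Hs & _).
  rewrite <- Hs. apply le_3sin. lra.
Qed.

Lemma theta_hi a : sqrt s1 < a < sqrt s2 -> PI / 2 - theta a <= 3 * sqrt (1 - xa a).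
Proof.
  intros Ha. destruct (theta_props a Ha) as (T1 & _ & _ & Hc).
  rewrite <- Hc. rewrite <- sin_shift. apply le_3sin. lra.
Qed.

Lemma sqrt_lt_bound x e : 0 < e -> x < (e / 3) ^ 2 -> 3 * sqrt x < e.
Proof.
  intros He Hx. destruct (Rle_or_lt x 0).
  - rewrite sqrt_neg_0 by auto. lra.
  - assert (sqrt x < e / 3); [|lra].
    rewrite <- (sqrt_pow2 (e/3)) by lra. apply sqrt_lt_1; try lra.
Qed.

Lemma ball_R (x e y : R) : ball x e y <-> Rabs (y - x) < e.
Proof. reflexivity. Qed.

Lemma T_gen : is_RInt_gen gg (at_right (sqrt s1)) (at_left (sqrt s2))
   (sqrt 2 * Ith s1 s2 s3).
Proof.
  set (r1 := sqrt s1). set (r2 := sqrt s2).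
  assert (R1: 0 < r1) by (apply sqrt_lt_R0; lra).
  assert (R12: r1 < r2) by (apply sqrt_lt_1; lra).
  assert (q1: r1 ^ 2 = s1) by (apply sqrt_sq2; lra).
  assert (q2: r2 ^ 2 = s2) by (apply sqrt_sq2; lra).
  apply (filterlimi_locally (F := filter_prod (at_right r1) (at_left r2))).
  intros eps.
  set (M := / sqrt (s3 - s2)).
  assert (HM: 0 < M) by (apply Rinv_0_lt_compat, sqrt_lt_R0; lra).
  set (K := sqrt 2 * M).
  assert (HK: 0 < K) by (apply Rmult_lt_0_compat; auto; apply sqrt_lt_R0; lra).
  set (eta := eps / (2 * K + 1)).
  assert (Heta: 0 < eta) by (apply Rdiv_lt_0_compat; [apply cond_pos|lra]).
  assert (Hke: 2 * K * eta < eps).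
  { unfold eta. pose proof (cond_pos eps).
    apply (Rmult_lt_reg_r (2 * K + 1)). lra. unfold Rdiv. 
    replace (2 * K * (eps * / (2 * K + 1)) * (2 * K + 1)) with (2 * K * eps) by (field; lra).
    nra. }
  set (c := (s2 - s1) * (eta / 3) ^ 2).
  assert (Hc: 0 < c) by (unfold c; apply Rmult_lt_0_compat; [lra| apply pow_lt; lra]).
  set (d1 := Rmin (Rmin 1 ((r2 - r1) / 2)) (c / (2 * r1 + 1))).
  set (d2 := Rmin (Rmin 1 ((r2 - r1) / 2)) (c / (2 * r2 + 1))).
  assert (Hd1: 0 < d1).
  { unfold d1. apply Rmin_glb_lt. apply Rmin_glb_lt; lra. apply Rdiv_lt_0_compat; lra. }
  assert (Hd2: 0 < d2).
  { unfold d2. apply Rmin_glb_lt. apply Rmin_glb_lt; lra. apply Rdiv_lt_0_compat; lra. }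
  apply (Filter_prod _ _ _ (fun a => r1 < a < r1 + d1) (fun b => r2 - d2 < b < r2)).
  - exists (mkposreal d1 Hd1). intros y Hy Hy'. apply ball_R in Hy. simpl in Hy.
    apply Rabs_def2 in Hy. unfold minus, plus, opp in Hy; simpl in Hy. lra.
  - exists (mkposreal d2 Hd2). intros y Hy Hy'. apply ball_R in Hy. simpl in Hy.
    apply Rabs_def2 in Hy. unfold minus, plus, opp in Hy; simpl in Hy. lra.
  - intros a b Ha Hb.
    assert (d1 <= 1) by (unfold d1; eapply Rle_trans; [apply Rmin_l|apply Rmin_l]).
    assert (d1 <= (r2 - r1)/2) by (unfold d1; eapply Rle_trans; [apply Rmin_l|apply Rmin_r]).
    assert (d1 <= c / (2 * r1 + 1)) by (unfold d1; apply Rmin_r).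
    assert (d2 <= 1) by (unfold d2; eapply Rle_trans; [apply Rmin_l|apply Rmin_l]).
    assert (d2 <= (r2 - r1)/2) by (unfold d2; eapply Rle_trans; [apply Rmin_l|apply Rmin_r]).
    assert (d2 <= c / (2 * r2 + 1)) by (unfold d2; apply Rmin_r).
    assert (Ha': r1 < a < r2) by lra.
    assert (Hb': r1 < b < r2) by lra.
    exists (sqrt 2 * RInt (hth s1 s2 s3) (theta a) (theta b)). split.
    + apply is_RInt_mid; auto.
    + apply ball_R.
      assert (Ta: theta a < eta).
      { eapply Rle_lt_trans. apply theta_lo; auto. apply sqrt_lt_bound. auto.
        unfold xa. apply (Rmult_lt_reg_r (s2 - s1)). lra. unfold Rdiv. 
        rewrite Rmult_assoc, Rinv_l, Rmult_1_r by lra.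
        assert (Hac: a ^ 2 - s1 < c).
        { rewrite <- q1. replace (a ^ 2 - r1 ^ 2) with ((a - r1) * (a + r1)) by ring.
          assert (c = (c / (2 * r1 + 1)) * (2 * r1 + 1)) by (field; lra).
          assert ((a - r1) * (a + r1) < d1 * (2 * r1 + 1)).
          { assert (a + r1 < 2 * r1 + 1) by lra. 
            apply (Rle_lt_trans _ ((a - r1) * (2 * r1 + 1))). 
            apply Rmult_le_compat_l; lra. apply Rmult_lt_compat_r; lra. }
          assert (d1 * (2 * r1 + 1) <= c / (2 * r1 + 1) * (2 * r1 + 1)) by
            (apply Rmult_le_compat_r; lra).
          lra. }
        unfold c, Rdiv in Hac. rewrite Rmult_comm. exact Hac. }
      assert (Tb: PI / 2 - theta b < eta).
      { eapply Rle_lt_trans. apply theta_hi; auto. apply sqrt_lt_bound. auto.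
        unfold xa. 
        replace (1 - (b ^ 2 - s1) / (s2 - s1)) with ((s2 - b ^ 2) / (s2 - s1)) by (field; lra).
        apply (Rmult_lt_reg_r (s2 - s1)). lra. unfold Rdiv. 
        rewrite Rmult_assoc, Rinv_l, Rmult_1_r by lra.
        assert (Hac: s2 - b ^ 2 < c).
        { rewrite <- q2. replace (r2 ^ 2 - b ^ 2) with ((r2 - b) * (r2 + b)) by ring.
          assert (c = (c / (2 * r2 + 1)) * (2 * r2 + 1)) by (field; lra).
          assert ((r2 - b) * (r2 + b) < d2 * (2 * r2 + 1)).
          { assert (r2 + b < 2 * r2 + 1) by lra. 
            apply (Rle_lt_trans _ ((r2 - b) * (2 * r2 + 1))). 
            apply Rmult_le_compat_l; lra. apply Rmult_lt_compat_r; lra. }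
          assert (d2 * (2 * r2 + 1) <= c / (2 * r2 + 1) * (2 * r2 + 1)) by
            (apply Rmult_le_compat_r; lra).
          lra. }
        unfold c, Rdiv in Hac. rewrite Rmult_comm. exact Hac. }
      destruct (theta_props a Ha') as (Ta' & _).
      destruct (theta_props b Hb') as (Tb' & _).
      unfold Ith.
      assert (Ex: forall u v, ex_RInt (hth s1 s2 s3) u v) by (intros; apply hth_ex_RInt; auto).
      rewrite <- (RInt_Chasles (V:=R_CompleteNormedModule) _ 0 (theta a) (PI/2)) by auto.
      rewrite <- (RInt_Chasles (V:=R_CompleteNormedModule) _ (theta a) (theta b) (PI/2)) by auto.
      change plus with Rplus.
      pose proof (abs_RInt_h s1 s2 s3 0 (theta a) H0 H12 H23) as Ra.
      pose proof (abs_RInt_h s1 s2 s3 (theta b) (PI/2) H0 H12 H23) as Rb.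
      fold M in Ra, Rb.
      rewrite (Rabs_right (theta a - 0)) in Ra by lra. rewrite (Rabs_right (PI/2 - theta b)) in Rb by lra.
      replace (sqrt 2 * RInt (hth s1 s2 s3) (theta a) (theta b) -
        sqrt 2 * (RInt (hth s1 s2 s3) 0 (theta a) +
        (RInt (hth s1 s2 s3) (theta a) (theta b) + RInt (hth s1 s2 s3) (theta b) (PI / 2))))
        with (- sqrt 2 * (RInt (hth s1 s2 s3) 0 (theta a) + RInt (hth s1 s2 s3) (theta b) (PI / 2)))
        by ring.
      rewrite Rabs_mult. rewrite Rabs_Ropp. rewrite Rabs_right by (apply Rle_ge, sqrt_pos).
      pose proof (Rabs_triang (RInt (hth s1 s2 s3) 0 (theta a)) (RInt (hth s1 s2 s3) (theta b) (PI / 2))).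
      assert (Hs2: 0 < sqrt 2) by (apply sqrt_lt_R0; lra).
      apply (Rle_lt_trans _ (sqrt 2 * (M * (theta a - 0) + M * (PI / 2 - theta b)))).
      apply Rmult_le_compat_l; lra.
      unfold K in Hke. 
      assert (0 < sqrt 2 * M) by (apply Rmult_lt_0_compat; lra).
      assert (sqrt 2 * M * theta a < sqrt 2 * M * eta) by (apply Rmult_lt_compat_l; lra).
      assert (sqrt 2 * M * (PI/2 - theta b) < sqrt 2 * M * eta) by (apply Rmult_lt_compat_l; lra).
      replace (sqrt 2 * (M * (theta a - 0) + M * (PI / 2 - theta b))) with
        (sqrt 2 * M * theta a + sqrt 2 * M * (PI/2 - theta b)) by ring.
      lra.
Qed.
End Sub.

Lemma T_formula J E s1 s2 s3 : is_triple (4 * E) (2 * J ^ 2) s1 s2 s3 ->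
  T J E = 2 * (sqrt 2 * Ith s1 s2 s3).
Proof.
  intros HT. unfold T. rewrite (roots_eq _ _ _ _ _ HT).
  f_equal. apply (is_RInt_gen_unique (V:=R_CompleteNormedModule)).
  apply (T_gen J E s1 s2 s3 HT).
Qed.

Lemma loc_pos (f : R -> R) x : continuous f x -> 0 < f x -> locally x (fun y => 0 < f y).
Proof.
  intros Hc Hp. apply (filterlim_locally (F:=locally x)) with (eps := mkposreal _ Hp) in Hc.
  eapply filter_imp; [|exact Hc]. intros y Hy. simpl in Hy.
  change (Rabs (f y - f x) < f x) in Hy. apply Rabs_def2 in Hy. lra.
Qed.

Lemma loc_neg (f : R -> R) x : continuous f x -> f x < 0 -> locally x (fun y => f y < 0).
Proof.
  intros Hc Hp. assert (Hp' : 0 < - f x) by lra.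
  apply (filterlim_locally (F:=locally x)) with (eps := mkposreal _ Hp') in Hc.
  eapply filter_imp; [|exact Hc]. intros y Hy. simpl in Hy.
  change (Rabs (f y - f x) < - f x) in Hy. apply Rabs_def2 in Hy. lra.
Qed.

Lemma loc_ball x (P : R -> Prop) : locally x P -> exists d, 0 < d /\ forall y, Rabs (y - x) < d -> P y.
Proof. intros [e He]. exists e. split. apply cond_pos. intros y Hy. apply He. exact Hy. Qed.

Lemma ball_loc x (P : R -> Prop) d : 0 < d -> (forall y, Rabs (y - x) < d -> P y) -> locally x P.
Proof. intros Hd H. exists (mkposreal d Hd). intros y Hy. apply H. exact Hy. Qed.

Lemma Pc_diff b c b0 c0 s s0 : Pc b c s - Pc b0 c0 s0 =
  (s - s0) * (s ^ 2 + s * s0 + s0 ^ 2 - 2 * s - 2 * s0 + b) + (b - b0) * s0 - (c - c0).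
Proof. unfold Pc. ring. Qed.

Lemma deriv_from_cont (f q : R -> R) x :
  locally 0 (fun h => h <> 0 -> (f (x + h) - f x) / h = q h) -> continuous q 0 ->
  is_derive f x (q 0).
Proof.
  intros Hl Hc. apply is_derive_Reals. intros eps Heps.
  apply (filterlim_locally (F:=locally 0)) with (eps := mkposreal _ Heps) in Hc.
  destruct (loc_ball _ _ (filter_and _ _ Hl Hc)) as [d [dp Hd]].
  exists (mkposreal d dp). intros h Hh0 Hhd. simpl in Hhd.
  destruct (Hd h ltac:(rewrite Rminus_0_r; auto)) as [Q1 Q2].
  rewrite Q1 by auto. exact Q2.
Qed.

Lemma cplus (f g : R -> R) x : continuous f x -> continuous g x -> continuous (fun y => f y + g y) x.
Proof. intros. apply (continuous_plus (K:=R_AbsRing) (V:=R_NormedModule) f g); auto. Qed.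

Lemma cmult (f g : R -> R) x : continuous f x -> continuous g x -> continuous (fun y => f y * g y) x.
Proof. intros. apply (continuous_mult (K:=R_AbsRing) f g); auto. Qed.

Lemma cont_neq0 (f : R -> R) x : continuous f x -> f x <> 0 -> locally x (fun y => f y <> 0).
Proof.
  intros Hc Hn. destruct (Rlt_or_le 0 (f x)).
  - eapply filter_imp; [|apply loc_pos; eauto]. intros; simpl; lra.
  - eapply filter_imp; [|apply loc_neg; eauto; lra]. intros; simpl; lra.
Qed.

Lemma dminus (f g : R -> R) x df dg : is_derive f x df -> is_derive g x dg ->
  is_derive (fun y => f y - g y) x (df - dg).
Proof. intros. apply (is_derive_minus (K:=R_AbsRing) (V:=R_NormedModule) f g); auto. Qed.

Lemma dscal_r (f : R -> R) x k df : is_derive f x df -> is_derive (fun y => f y * k) x (df * k).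
Proof. intros H. replace (df * k) with (k * df) by ring. 
  apply (is_derive_ext (fun y => k * f y)). intros; simpl; ring.
  apply is_derive_scal. auto. Qed.

Lemma c2_u (f : R -> R) x y : continuity_pt f x -> continuity_2d_pt (fun u v => f u) x y.
Proof. intros H. apply (continuity_1d_2d_pt_comp f (fun u _ => u) x y H (continuity_2d_pt_id1 x y)). Qed.

Lemma c2_v (f : R -> R) x y : continuity_pt f y -> continuity_2d_pt (fun u v => f v) x y.
Proof. intros H. apply (continuity_1d_2d_pt_comp f (fun _ v => v) x y H (continuity_2d_pt_id2 x y)). Qed.

Lemma cpt (f : R -> R) x : continuous f x -> continuity_pt f x.
Proof. intros. apply continuity_pt_filterlim. auto. Qed.

Lemma cpt_d (f : R -> R) x : ex_derive f x -> continuity_pt f x.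
Proof. intros. apply cpt, cont_of_derive. auto. Qed.

Section Pert.
Variables (b1 b0 g2 g0 : R).
Definition bf p := b1 * p + b0.
Definition cf p := g2 * p ^ 2 + g0.
Variable rt : R -> R * R * R.
Hypothesis Hrt : forall p s1 s2 s3, is_triple (bf p) (cf p) s1 s2 s3 -> rt p = (sqrt s1, sqrt s2, sqrt s3).

Definition S1 p := (fst (fst (rt p))) ^ 2.
Definition S2 p := (snd (fst (rt p))) ^ 2.
Definition S3 p := (snd (rt p)) ^ 2.

Lemma S_eq p s1 s2 s3 : is_triple (bf p) (cf p) s1 s2 s3 -> S1 p = s1 /\ S2 p = s2 /\ S3 p = s3.
Proof.
  intros H. unfold S1, S2, S3. rewrite (Hrt _ _ _ _ H). cbn [fst snd].
  destruct H as (A & B & C & _). rewrite !sqrt_sq2 by lra. auto.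
Qed.

Lemma Pcp_cont s p : continuous (fun p => Pc (bf p) (cf p) s) p.
Proof. apply cont_of_derive. unfold Pc, bf, cf. auto_derive. auto. Qed.

Lemma pert p0 s1 s2 s3 : is_triple (bf p0) (cf p0) s1 s2 s3 ->
  forall e, 0 < e -> exists d, 0 < d /\ forall p, Rabs (p - p0) < d ->
   is_triple (bf p) (cf p) (S1 p) (S2 p) (S3 p) /\
   Rabs (S1 p - s1) < e /\ Rabs (S2 p - s2) < e /\ Rabs (S3 p - s3) < e.
Proof.
  intros HT e He. pose proof HT as (h0 & h12 & h23 & _).
  set (m := Rmin (Rmin s1 ((s2 - s1)/2)) (Rmin ((s3 - s2)/2) e)).
  assert (m1: m <= s1) by (unfold m; eapply Rle_trans; [apply Rmin_l|apply Rmin_l]).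
  assert (m2: m <= (s2 - s1)/2) by (unfold m; eapply Rle_trans; [apply Rmin_l|apply Rmin_r]).
  assert (m3: m <= (s3 - s2)/2) by (unfold m; eapply Rle_trans; [apply Rmin_r|apply Rmin_l]).
  assert (m4: m <= e) by (unfold m; eapply Rle_trans; [apply Rmin_r|apply Rmin_r]).
  assert (mp: 0 < m).
  { unfold m. apply Rmin_glb_lt; apply Rmin_glb_lt; lra. }
  set (k := m / 2).
  assert (kp: 0 < k) by (unfold k; lra).
  assert (kd: m = 2 * k) by (unfold k; field).
  pose proof (triple_factor _ _ _ _ _ HT) as F.
  assert (A1: locally p0 (fun p => Pc (bf p) (cf p) (s1 - k) < 0)).
  { apply loc_neg. apply Pcp_cont. rewrite F.
    assert (0 < (s2 - (s1 - k)) * (s3 - (s1 - k))) by (apply Rmult_lt_0_compat; lra).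
    assert (0 < k * ((s2 - (s1 - k)) * (s3 - (s1 - k)))) by (apply Rmult_lt_0_compat; lra).
    replace (((s1 - k) - s1) * ((s1 - k) - s2) * ((s1 - k) - s3)) with (-(k * ((s2 - (s1 - k)) * (s3 - (s1 - k))))) by ring. lra. }
  assert (A2: locally p0 (fun p => 0 < Pc (bf p) (cf p) (s1 + k))).
  { apply loc_pos. apply Pcp_cont. rewrite F.
    assert (0 < (s2 - (s1 + k)) * (s3 - (s1 + k))) by (apply Rmult_lt_0_compat; lra).
    assert (0 < k * ((s2 - (s1 + k)) * (s3 - (s1 + k)))) by (apply Rmult_lt_0_compat; lra).
    replace (((s1 + k) - s1) * ((s1 + k) - s2) * ((s1 + k) - s3)) with ((k * ((s2 - (s1 + k)) * (s3 - (s1 + k))))) by ring. lra. }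
  assert (A3: locally p0 (fun p => 0 < Pc (bf p) (cf p) (s2 - k))).
  { apply loc_pos. apply Pcp_cont. rewrite F.
    assert (0 < ((s2 - k) - s1) * (s3 - (s2 - k))) by (apply Rmult_lt_0_compat; lra).
    assert (0 < k * (((s2 - k) - s1) * (s3 - (s2 - k)))) by (apply Rmult_lt_0_compat; lra).
    replace (((s2 - k) - s1) * ((s2 - k) - s2) * ((s2 - k) - s3)) with ((k * (((s2 - k) - s1) * (s3 - (s2 - k))))) by ring. lra. }
  assert (A4: locally p0 (fun p => Pc (bf p) (cf p) (s2 + k) < 0)).
  { apply loc_neg. apply Pcp_cont. rewrite F.
    assert (0 < ((s2 + k) - s1) * (s3 - (s2 + k))) by (apply Rmult_lt_0_compat; lra).
    assert (0 < k * (((s2 + k) - s1) * (s3 - (s2 + k)))) by (apply Rmult_lt_0_compat; lra).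
    replace (((s2 + k) - s1) * ((s2 + k) - s2) * ((s2 + k) - s3)) with (-(k * (((s2 + k) - s1) * (s3 - (s2 + k))))) by ring. lra. }
  assert (A5: locally p0 (fun p => Pc (bf p) (cf p) (s3 - k) < 0)).
  { apply loc_neg. apply Pcp_cont. rewrite F.
    assert (0 < ((s3 - k) - s1) * ((s3 - k) - s2)) by (apply Rmult_lt_0_compat; lra).
    assert (0 < k * (((s3 - k) - s1) * ((s3 - k) - s2))) by (apply Rmult_lt_0_compat; lra).
    replace (((s3 - k) - s1) * ((s3 - k) - s2) * ((s3 - k) - s3)) with (-(k * (((s3 - k) - s1) * ((s3 - k) - s2)))) by ring. lra. }
  assert (A6: locally p0 (fun p => 0 < Pc (bf p) (cf p) (s3 + k))).
  { apply loc_pos. apply Pcp_cont. rewrite F.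
    assert (0 < ((s3 + k) - s1) * ((s3 + k) - s2)) by (apply Rmult_lt_0_compat; lra).
    assert (0 < k * (((s3 + k) - s1) * ((s3 + k) - s2))) by (apply Rmult_lt_0_compat; lra).
    replace (((s3 + k) - s1) * ((s3 + k) - s2) * ((s3 + k) - s3)) with ((k * (((s3 + k) - s1) * ((s3 + k) - s2)))) by ring. lra. }
  pose proof (filter_and _ _ A1 (filter_and _ _ A2 (filter_and _ _ A3 
     (filter_and _ _ A4 (filter_and _ _ A5 A6))))) as A.
  destruct (loc_ball _ _ A) as [d [dp Hd]].
  exists d. split; auto. intros p Hp.
  destruct (Hd p Hp) as (B1 & B2 & B3 & B4 & B5 & B6).
  destruct (ivt_up _ _ (s1 - k) (s1 + k) ltac:(lra) B1 B2) as [r1 [I1 R1]].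
  destruct (ivt_down _ _ (s2 - k) (s2 + k) ltac:(lra) B3 B4) as [r2 [I2 R2]].
  destruct (ivt_up _ _ (s3 - k) (s3 + k) ltac:(lra) B5 B6) as [r3 [I3 R3]].
  assert (HT': is_triple (bf p) (cf p) r1 r2 r3) by (repeat split; auto; lra).
  destruct (S_eq _ _ _ _ HT') as (E1 & E2 & E3). rewrite E1, E2, E3.
  split; auto.
  repeat split; apply Rabs_def1; lra.
Qed.

Lemma pert_cont p0 s1 s2 s3 : is_triple (bf p0) (cf p0) s1 s2 s3 ->
  continuous S1 p0 /\ continuous S2 p0 /\ continuous S3 p0.
Proof.
  intros HT. destruct (S_eq _ _ _ _ HT) as (E1 & E2 & E3).
  repeat split; apply (filterlim_locally (F:=locally p0)); intros eps;
  destruct (pert _ _ _ _ HT eps (cond_pos eps)) as [d [dp Hd]];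
  apply (ball_loc _ _ d dp); intros y Hy; destruct (Hd y Hy) as (_ & Q1 & Q2 & Q3);
  change (Rabs (S1 y - S1 p0) < eps) || change (Rabs (S2 y - S2 p0) < eps) ||
  change (Rabs (S3 y - S3 p0) < eps); congruence.
Qed.


Lemma deriv_gen (S : R -> R) p0 s : S p0 = s -> continuous S p0 -> dPc (bf p0) s <> 0 ->
  locally p0 (fun p => Pc (bf p) (cf p) (S p) = 0) -> Pc (bf p0) (cf p0) s = 0 ->
  is_derive S p0 (- (b1 * s - 2 * g2 * p0) / dPc (bf p0) s).
Proof.
  intros E0 Hc Hd Hl Hp0.
  set (M := fun p => S p ^ 2 + S p * s + s ^ 2 - 2 * S p - 2 * s + bf p).
  assert (MC: continuous M p0).
  { set (G := fun x => x ^ 2 + x * s + s ^ 2 - 2 * x - 2 * s).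
    assert (ME: forall p, M p = G (S p) + bf p) by (intros; unfold M, G; ring).
    apply (continuous_ext (fun p => G (S p) + bf p)). intros; rewrite ME; auto.
    apply cplus.
    - apply (continuous_comp S G). auto. apply cont_of_derive. unfold G. auto_derive. auto.
    - apply cont_of_derive. unfold bf. auto_derive. auto. }
  assert (M0: M p0 = dPc (bf p0) s) by (unfold M, dPc; rewrite E0; ring).
  assert (MN: locally p0 (fun p => M p <> 0)) by (apply cont_neq0; auto; congruence).
  set (q := fun h => - (b1 * s - g2 * (2 * p0 + h)) / M (p0 + h)).
  replace (- (b1 * s - 2 * g2 * p0) / dPc (bf p0) s) with (q 0)
    by (unfold q; rewrite !Rplus_0_r, M0; f_equal; ring).
  apply deriv_from_cont.
  - destruct (loc_ball _ _ (filter_and _ _ Hl MN)) as [d [dp Hd']].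
    apply (ball_loc _ _ d dp). intros h Hh Hh0. 
    destruct (Hd' (p0 + h) ltac:(rewrite Rminus_0_r in Hh; replace (p0 + h - p0) with h by ring; auto)) as [Z Mz].
    pose proof (Pc_diff (bf (p0 + h)) (cf (p0 + h)) (bf p0) (cf p0) (S (p0 + h)) s) as D.
    rewrite Z, Hp0 in D. fold (M (p0 + h)) in D. 
    unfold q. rewrite E0. unfold bf, cf in D. field_simplify_eq; [|split; auto].
    unfold M in *. unfold bf in *. nra.
  - unfold q. unfold Rdiv. apply cmult.
    + apply cont_of_derive. auto_derive. auto.
    + apply continuous_Rinv_comp. 
      * apply (continuous_comp (fun h => p0 + h) M). apply cont_of_derive. auto_derive. auto.
        rewrite Rplus_0_r. auto.
      * rewrite !Rplus_0_r, M0. auto.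
Qed.

Definition dS (S : R -> R) u := - (b1 * S u - 2 * g2 * u) / dPc (bf u) (S u).

Lemma S_deriv p0 s1 s2 s3 : is_triple (bf p0) (cf p0) s1 s2 s3 ->
  is_derive S1 p0 (dS S1 p0) /\ is_derive S2 p0 (dS S2 p0) /\ is_derive S3 p0 (dS S3 p0).
Proof.
  intros HT. destruct (S_eq _ _ _ _ HT) as (E1 & E2 & E3).
  destruct (pert_cont _ _ _ _ HT) as (C1 & C2 & C3).
  destruct (triple_dP _ _ _ _ _ HT) as (D1 & D2 & D3).
  pose proof HT as (h0 & h12 & h23 & P1 & P2 & P3).
  destruct (pert _ _ _ _ HT 1 ltac:(lra)) as [d [dp Hd]].
  unfold dS. rewrite E1, E2, E3. 
  split; [|split]; apply deriv_gen; auto;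
    try (rewrite ?D1, ?D2, ?D3; apply Rmult_integral_contrapositive; split; lra);
    apply (ball_loc _ _ d dp); intros y Hy; destruct (Hd y Hy) as ((_ & _ & _ & Q1 & Q2 & Q3) & _); auto.
Qed.

Lemma good_loc p0 s1 s2 s3 : is_triple (bf p0) (cf p0) s1 s2 s3 ->
  locally p0 (fun p => is_triple (bf p) (cf p) (S1 p) (S2 p) (S3 p)).
Proof.
  intros HT. destruct (pert _ _ _ _ HT 1 ltac:(lra)) as [d [dp Hd]].
  apply (ball_loc _ _ d dp). intros y Hy. apply Hd. auto.
Qed.

Lemma dS_cont S p0 s : continuous S p0 -> S p0 = s -> dPc (bf p0) s <> 0 -> continuous (dS S) p0.
Proof.
  intros Hc E0 Hd. unfold dS. unfold Rdiv. apply cmult.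
  - apply (continuous_ext (fun u => - (b1 * S u) + (2 * g2 * u))). intros; simpl; ring.
    apply cplus. 
    + apply (continuous_comp S (fun y => - (b1 * y))). auto. apply cont_of_derive. auto_derive. auto.
    + apply cont_of_derive. auto_derive. auto.
  - apply continuous_Rinv_comp.
    + apply (continuous_ext (fun u => 3 * S u ^ 2 - 4 * S u + b1 * u + b0)). intros; unfold dPc, bf; simpl; ring.
      apply cplus. apply cplus. apply (continuous_comp S (fun y => 3 * y ^ 2 - 4 * y)). auto.
      apply cont_of_derive. auto_derive. auto.
      apply cont_of_derive. auto_derive. auto. apply continuous_const.
    + rewrite E0. auto.
Qed.

Definition fI u t := hth (S1 u) (S2 u) (S3 u) t.
Definition DD u t := Dth (S1 u) (S2 u) (S3 u) t.
Definition Kd u t := - (dS S3 u - dS S1 u * cos t ^ 2 - dS S2 u * sin t ^ 2) *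
   / (2 * (DD u t * sqrt (DD u t))).

Lemma fI_deriv x t : is_triple (bf x) (cf x) (S1 x) (S2 x) (S3 x) ->
  is_derive (fun u => fI u t) x (Kd x t).
Proof.
  intros HT. destruct (S_deriv _ _ _ _ HT) as (A1 & A2 & A3).
  pose proof HT as (h0 & h12 & h23 & _).
  pose proof (D_bounds _ _ _ t h0 h12 h23) as Db.
  assert (Dd: is_derive (fun u => DD u t) x (dS S3 x - dS S1 x * cos t ^ 2 - dS S2 x * sin t ^ 2)).
  { unfold DD, Dth. apply dminus. apply dminus. auto. apply dscal_r. auto. apply dscal_r. auto. }
  assert (Q: is_derive (fun y => / sqrt y) (DD x t) (- / (2 * (DD x t * sqrt (DD x t))))).
  { unfold DD. assert (0 < sqrt (Dth (S1 x) (S2 x) (S3 x) t)) by (apply sqrt_lt_R0; lra).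
    auto_derive. split. lra. split; auto. lra.
    replace (sqrt (Dth (S1 x) (S2 x) (S3 x) t) * sqrt (Dth (S1 x) (S2 x) (S3 x) t))
      with (Dth (S1 x) (S2 x) (S3 x) t) by (rewrite sqrt_sqrt; lra).
    field. lra. }
  pose proof (is_derive_comp (fun y => / sqrt y) (fun u => DD u t) x _ _ Q Dd) as C.
  unfold fI, hth. 
  replace (Kd x t) with (scal (dS S3 x - dS S1 x * cos t ^ 2 - dS S2 x * sin t ^ 2)
    (- / (2 * (DD x t * sqrt (DD x t))))).
  exact C.
  unfold Kd. change (scal ?a ?b) with (a * b). match goal with |- ?a = ?b => change (@eq R a b) end. ring.
Qed.

Lemma Kd_cont p0 t : is_triple (bf p0) (cf p0) (S1 p0) (S2 p0) (S3 p0) -> continuity_2d_pt Kd p0 t.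
Proof.
  intros HT. pose proof HT as (h0 & h12 & h23 & _).
  destruct (pert_cont _ _ _ _ HT) as (C1 & C2 & C3).
  destruct (triple_dP _ _ _ _ _ HT) as (D1 & D2 & D3).
  assert (N1: dPc (bf p0) (S1 p0) <> 0) by (rewrite D1; apply Rmult_integral_contrapositive; split; lra).
  assert (N2: dPc (bf p0) (S2 p0) <> 0) by (rewrite D2; apply Rmult_integral_contrapositive; split; lra).
  assert (N3: dPc (bf p0) (S3 p0) <> 0) by (rewrite D3; apply Rmult_integral_contrapositive; split; lra).
  assert (K1 := dS_cont S1 p0 _ C1 eq_refl N1).
  assert (K2 := dS_cont S2 p0 _ C2 eq_refl N2).
  assert (K3 := dS_cont S3 p0 _ C3 eq_refl N3).
  assert (cc: continuity_2d_pt (fun u v => cos v ^ 2) p0 t).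
  { apply (c2_v (fun v => cos v ^ 2)). apply cpt_d. auto_derive. auto. }
  assert (ss: continuity_2d_pt (fun u v => sin v ^ 2) p0 t).
  { apply (c2_v (fun v => sin v ^ 2)). apply cpt_d. auto_derive. auto. }
  pose proof (D_bounds _ _ _ t h0 h12 h23) as Db.
  assert (DC: continuity_2d_pt DD p0 t).
  { unfold DD, Dth. apply continuity_2d_pt_minus. apply continuity_2d_pt_minus.
    apply (c2_u S3). apply cpt; auto.
    apply continuity_2d_pt_mult. apply (c2_u S1). apply cpt; auto. auto.
    apply continuity_2d_pt_mult. apply (c2_u S2). apply cpt; auto. auto. }
  unfold Kd. apply continuity_2d_pt_mult.
  - apply continuity_2d_pt_opp. apply continuity_2d_pt_minus. apply continuity_2d_pt_minus.
    apply (c2_u (dS S3)). apply cpt; auto.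
    apply continuity_2d_pt_mult. apply (c2_u (dS S1)). apply cpt; auto. auto.
    apply continuity_2d_pt_mult. apply (c2_u (dS S2)). apply cpt; auto. auto.
  - apply continuity_2d_pt_inv.
    + apply continuity_2d_pt_mult. apply continuity_2d_pt_const.
      apply continuity_2d_pt_mult. auto.
      apply (continuity_1d_2d_pt_comp sqrt DD). apply continuity_pt_sqrt. unfold DD. lra. auto.
    + unfold DD. assert (0 < sqrt (Dth (S1 p0) (S2 p0) (S3 p0) t)) by (apply sqrt_lt_R0; lra).
      apply Rgt_not_eq. apply Rmult_lt_0_compat. lra. apply Rmult_lt_0_compat; lra.
Qed.

Lemma Ith_deriv p0 : is_triple (bf p0) (cf p0) (S1 p0) (S2 p0) (S3 p0) ->
  is_derive (fun u => Ith (S1 u) (S2 u) (S3 u)) p0 (RInt (Kd p0) 0 (PI / 2)).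
Proof.
  intros HT. destruct (good_loc _ _ _ _ HT) as [d Hd].
  change (is_derive (fun u => RInt (fun t => fI u t) 0 (PI/2)) p0 (RInt (Kd p0) 0 (PI / 2))).
  assert (R: RInt (Kd p0) 0 (PI / 2) = RInt (fun t => Derive (fun u => fI u t) p0) 0 (PI / 2)).
  { apply RInt_ext. intros x _. symmetry. apply is_derive_unique. apply fI_deriv. auto. }
  rewrite R. apply (is_derive_RInt_param fI 0 (PI/2) p0).
  - exists d. intros y Hy t _. eexists. apply fI_deriv. apply Hd. auto.
  - intros t _. apply continuity_2d_pt_ext_loc with (f := Kd).
    + exists d. intros u v Hu Hv. symmetry. apply is_derive_unique. apply fI_deriv. apply Hd. auto.
    + apply Kd_cont. auto.
  - exists d. intros y Hy. pose proof (Hd y Hy) as (h0 & h12 & h23 & _).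
    unfold fI. apply hth_ex_RInt; auto.
Qed.
End Pert.

Lemma exc (f : R -> R) a b : (forall x, continuous f x) -> ex_RInt f a b.
Proof. intros. apply (ex_RInt_continuous (V:=R_CompleteNormedModule)). auto. Qed.

Lemma RInt_lin (f g : R -> R) a b p q : ex_RInt f a b -> ex_RInt g a b ->
  RInt (fun t => p * f t + q * g t) a b = p * RInt f a b + q * RInt g a b.
Proof.
  intros Hf Hg.
  assert (E1: ex_RInt (fun t => p * f t) a b) by (apply (ex_RInt_scal (V:=R_NormedModule) f a b p); auto).
  assert (E2: ex_RInt (fun t => q * g t) a b) by (apply (ex_RInt_scal (V:=R_NormedModule) g a b q); auto).
  pose proof (RInt_plus (V:=R_CompleteNormedModule) (fun t => p * f t) (fun t => q * g t) a b E1 E2) as H1.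
  pose proof (RInt_scal (V:=R_CompleteNormedModule) f a b p Hf) as H2.
  pose proof (RInt_scal (V:=R_CompleteNormedModule) g a b q Hg) as H3.
  change (RInt (fun t => p * f t) a b = p * RInt f a b) in H2.
  change (RInt (fun t => q * g t) a b = q * RInt g a b) in H3.
  change (RInt (fun t => p * f t + q * g t) a b = RInt (fun t => p * f t) a b + RInt (fun t => q * g t) a b) in H1.
  rewrite H1, H2, H3. reflexivity.
Qed.

Lemma RInt_add (f g : R -> R) a b : ex_RInt f a b -> ex_RInt g a b ->
  RInt (fun t => f t + g t) a b = RInt f a b + RInt g a b.
Proof.
  intros Hf Hg. rewrite <- (Rmult_1_l (RInt f a b)), <- (Rmult_1_l (RInt g a b)).
  rewrite <- RInt_lin by auto. apply RInt_ext. intros x _. match goal with |- ?u = ?v => change (@eq R u v) end. ring.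
Qed.

Lemma RInt_zero a b : RInt (fun _ => 0) a b = 0.
Proof. rewrite (RInt_const (V:=R_CompleteNormedModule)). change (scal (b - a) 0) with ((b - a) * 0). match goal with |- ?x = ?y => change (@eq R x y) end. ring. Qed.

Section Sign.
Variables s1 s2 s3 : R.
Hypothesis h0 : 0 < s1.
Hypothesis h12 : s1 < s2.
Hypothesis h23 : s2 < s3.

Definition wth t := / (Dth s1 s2 s3 t * sqrt (Dth s1 s2 s3 t)).

Lemma wth_pos t : 0 < wth t.
Proof. unfold wth. pose proof (D_bounds s1 s2 s3 t h0 h12 h23).
  apply Rinv_0_lt_compat. apply Rmult_lt_0_compat. lra. apply sqrt_lt_R0. lra. Qed.

Lemma wth_cont t : continuous wth t.
Proof. apply cont_of_derive. unfold wth, Dth. pose proof (D_bounds s1 s2 s3 t h0 h12 h23). unfold Dth in H.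
  assert (0 < sqrt (s3 - s1 * cos t ^ 2 - s2 * sin t ^ 2)) by (apply sqrt_lt_R0; lra).
  auto_derive. simpl in H, H0. unfold Rminus in H, H0. split. lra. split; auto. apply Rgt_not_eq, Rmult_lt_0_compat; lra. Qed.

Definition fc t := cos t ^ 2 * wth t.
Definition fs t := sin t ^ 2 * wth t.
Definition fd t := (cos t ^ 2 - sin t ^ 2) * wth t.

Lemma fc_cont t : continuous fc t.
Proof. unfold fc. apply cmult. apply cont_of_derive. auto_derive. auto. apply wth_cont. Qed.
Lemma fs_cont t : continuous fs t.
Proof. unfold fs. apply cmult. apply cont_of_derive. auto_derive. auto. apply wth_cont. Qed.
Lemma fd_cont t : continuous fd t.
Proof. unfold fd. apply cmult. apply cont_of_derive. auto_derive. auto. apply wth_cont. Qed.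

Lemma B2_pos : 0 < RInt fs 0 (PI / 2).
Proof.
  pose proof PI2_1. apply (Rle_lt_trans _ (RInt (fun _ => 0) 0 (PI/2))). rewrite RInt_zero; lra.
  apply RInt_lt. lra. intros; apply fs_cont. intros; apply continuous_const.
  intros x Hx. unfold fs. apply Rmult_lt_0_compat. apply pow_lt. apply sin_gt_0; lra. apply wth_pos.
Qed.

Lemma B1_nonneg : 0 <= RInt fc 0 (PI / 2).
Proof.
  pose proof PI2_1. apply (Rle_trans _ (RInt (fun _ => 0) 0 (PI/2))). rewrite RInt_zero; lra.
  apply RInt_le. lra. apply exc; intros; apply continuous_const. apply exc; apply fc_cont.
  intros x Hx. unfold fc. apply Rmult_le_pos. apply pow2_ge_0. left; apply wth_pos.
Qed.

Lemma cs_order y : 0 <= y <= PI / 4 -> sin y ^ 2 <= cos y ^ 2.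
Proof.
  intros Hy. pose proof (cos_2a y). pose proof PI_RGT_0.
  assert (0 <= cos (2 * y)) by (apply cos_ge_0; lra). simpl. lra.
Qed.

Lemma Bd_nonpos : RInt fd 0 (PI / 2) <= 0.
Proof.
  pose proof PI_RGT_0.
  rewrite <- (RInt_Chasles (V:=R_CompleteNormedModule) fd 0 (PI/4) (PI/2)) by (apply exc, fd_cont).
  assert (R: RInt fd (PI / 4) (PI / 2) = RInt (fun y => fd (-1 * y + PI / 2)) 0 (PI / 4)).
  { pose proof (RInt_comp_lin (V:=R_CompleteNormedModule) fd (-1) (PI/2) 0 (PI/4) ltac:(apply exc, fd_cont)) as H1.
    replace (-1 * 0 + PI / 2) with (PI/2) in H1 by ring.
    replace (-1 * (PI / 4) + PI / 2) with (PI/4) in H1 by field.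
    rewrite <- opp_RInt_swap by (apply exc, fd_cont).
    rewrite <- H1.
    rewrite (RInt_scal (V:=R_CompleteNormedModule) (fun y => fd (-1 * y + PI / 2)) 0 (PI/4) (-1)).
    change (opp (scal (-1) (RInt (fun y : R => fd (-1 * y + PI / 2)) 0 (PI / 4))) =
      RInt (fun y : R => fd (-1 * y + PI / 2)) 0 (PI / 4)).
    change (opp (-1 * (RInt (fun y : R => fd (-1 * y + PI / 2)) 0 (PI / 4))) =
      RInt (fun y : R => fd (-1 * y + PI / 2)) 0 (PI / 4)).
    change (- (-1 * (RInt (fun y : R => fd (-1 * y + PI / 2)) 0 (PI / 4))) =
      RInt (fun y : R => fd (-1 * y + PI / 2)) 0 (PI / 4)). ring.
    apply exc. intros x. apply (continuous_comp (fun y => -1 * y + PI/2) fd). 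
    apply cont_of_derive. auto_derive. auto. apply fd_cont. }
  rewrite R. change plus with Rplus.
  rewrite <- (RInt_add fd (fun y => fd (-1 * y + PI / 2)) 0 (PI/4)).
  2: apply exc, fd_cont.
  2: { apply exc. intros x. apply (continuous_comp (fun y => -1 * y + PI/2) fd). 
    apply cont_of_derive. auto_derive. auto. apply fd_cont. }
  apply (Rle_trans _ (RInt (fun _ => 0) 0 (PI/4))); [|rewrite RInt_zero; lra].
  apply RInt_le. lra.
  apply exc. intros x. apply cplus. apply fd_cont.
  apply (continuous_comp (fun y => -1 * y + PI/2) fd). 
    apply cont_of_derive. auto_derive. auto. apply fd_cont.
  apply exc; intros; apply continuous_const.
  intros y Hy. replace (-1 * y + PI / 2) with (PI / 2 - y) by ring.
  unfold fd, wth, Dth. rewrite sin_shift, cos_shift.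
  pose proof (cs_order y ltac:(lra)).
  pose proof (D_bounds s1 s2 s3 y h0 h12 h23) as Da. unfold Dth in Da.
  set (D := s3 - s1 * cos y ^ 2 - s2 * sin y ^ 2) in *.
  set (D' := s3 - s1 * sin y ^ 2 - s2 * cos y ^ 2).
  assert (HD: D' <= D) by (unfold D, D'; nra).
  assert (Dp: 0 < D'). { unfold D'. pose proof (sc1 y). 
    assert (0 <= sin y ^ 2) by apply pow2_ge_0. assert (0 <= cos y ^ 2) by apply pow2_ge_0. nra. }
  assert (0 < sqrt D') by (apply sqrt_lt_R0; lra).
  assert (sqrt D' <= sqrt D) by (apply sqrt_le_1; lra).
  assert (W: / (D * sqrt D) <= / (D' * sqrt D')).
  { apply Rinv_le_contravar. apply Rmult_lt_0_compat; lra. apply Rmult_le_compat; lra. }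
  assert (0 <= cos y ^ 2 - sin y ^ 2) by lra.
  replace (((cos y ^ 2 - sin y ^ 2) * / (D * sqrt D)) +
    ((sin y ^ 2 - cos y ^ 2) * / (D' * sqrt D')))
   with ((cos y ^ 2 - sin y ^ 2) * (/ (D * sqrt D) - / (D' * sqrt D'))) by ring.
  assert (/ (D * sqrt D) - / (D' * sqrt D') <= 0) by lra.
  nra.
Qed.

Lemma sign_main x1 x2 x3 : 0 < x2 - x3 -> 0 < x1 + x2 - 2 * x3 ->
  0 < RInt (fun t => - (x3 - x1 * cos t ^ 2 - x2 * sin t ^ 2) *
     / (2 * (Dth s1 s2 s3 t * sqrt (Dth s1 s2 s3 t)))) 0 (PI / 2).
Proof.
  intros A B.
  assert (Hw: forall t, / (2 * (Dth s1 s2 s3 t * sqrt (Dth s1 s2 s3 t))) = / 2 * wth t).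
  { intros t. unfold wth. pose proof (D_bounds s1 s2 s3 t h0 h12 h23).
    assert (0 < sqrt (Dth s1 s2 s3 t)) by (apply sqrt_lt_R0; lra).
    field. split; lra. }
  destruct (Rle_or_lt (x1 - x3) 0) as [C|C].
  - rewrite (RInt_ext _ (fun t => (/2 * (x1 - x3)) * fd t + (/2 * (x1 + x2 - 2 * x3)) * fs t)).
    rewrite RInt_lin by (apply exc; first [apply fd_cont|apply fs_cont]).
    pose proof Bd_nonpos. pose proof B2_pos.
    assert (0 <= / 2 * (x1 - x3) * RInt fd 0 (PI / 2)).
    { replace (/ 2 * (x1 - x3) * RInt fd 0 (PI / 2)) with (/2 * ((x1 - x3) * RInt fd 0 (PI / 2))) by ring.
      apply Rmult_le_pos. lra. nra. }
    assert (0 < / 2 * (x1 + x2 - 2 * x3) * RInt fs 0 (PI / 2)).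
    { apply Rmult_lt_0_compat; lra. }
    lra.
    intros t _. match goal with |- ?u = ?v => change (@eq R u v) end. rewrite Hw. unfold fd, fs. pose proof (sc1 t). 
    replace (x3) with (x3 * (sin t ^ 2 + cos t ^ 2)) at 1 by (rewrite H; ring). ring.
  - rewrite (RInt_ext _ (fun t => (/2 * (x1 - x3)) * fc t + (/2 * (x2 - x3)) * fs t)).
    rewrite RInt_lin by (apply exc; first [apply fc_cont|apply fs_cont]).
    pose proof B1_nonneg. pose proof B2_pos.
    assert (0 <= / 2 * (x1 - x3) * RInt fc 0 (PI / 2)).
    { apply Rmult_le_pos; lra. }
    assert (0 < / 2 * (x2 - x3) * RInt fs 0 (PI / 2)).
    { apply Rmult_lt_0_compat; lra. }
    lra.
    intros t _. match goal with |- ?u = ?v => change (@eq R u v) end. rewrite Hw. unfold fc, fs. pose proof (sc1 t). 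
    replace (x3) with (x3 * (sin t ^ 2 + cos t ^ 2)) at 1 by (rewrite H; ring). ring.
Qed.

Lemma sign_neg x1 x2 x3 : 0 < x3 - x2 -> 0 < 2 * x3 - x1 - x2 ->
  RInt (fun t => - (x3 - x1 * cos t ^ 2 - x2 * sin t ^ 2) *
     / (2 * (Dth s1 s2 s3 t * sqrt (Dth s1 s2 s3 t)))) 0 (PI / 2) < 0.
Proof.
  intros A B.
  set (G := fun t => - (- x3 - - x1 * cos t ^ 2 - - x2 * sin t ^ 2) *
     / (2 * (Dth s1 s2 s3 t * sqrt (Dth s1 s2 s3 t)))).
  assert (P := sign_main (- x1) (- x2) (- x3) ltac:(lra) ltac:(lra)). fold G in P.
  assert (GC: forall t, continuous G t).
  { intros t. unfold G. apply (continuous_ext (fun t => - (- x3 - - x1 * cos t ^ 2 - - x2 * sin t ^ 2) * (/2 * wth t))).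
    intros u. unfold wth. pose proof (D_bounds s1 s2 s3 u h0 h12 h23).
    assert (0 < sqrt (Dth s1 s2 s3 u)) by (apply sqrt_lt_R0; lra).
    simpl. field. split; lra.
    apply cmult. apply cont_of_derive. auto_derive. auto. apply cmult. apply continuous_const. apply wth_cont. }
  rewrite (RInt_ext _ (fun t => -1 * G t + 0 * G t)).
  rewrite RInt_lin by (apply exc; auto). lra.
  intros t _. unfold G. match goal with |- ?u = ?v => change (@eq R u v) end. ring.
Qed.
End Sign.

Lemma is_triple_ext b c b' c' s1 s2 s3 : b = b' -> c = c' ->
  is_triple b c s1 s2 s3 -> is_triple b' c' s1 s2 s3.
Proof. intros -> ->. auto. Qed.

Lemma lagrange_id s1 s2 s3 : s1 < s2 -> s2 < s3 ->
  s1 / ((s1 - s2) * (s1 - s3)) + s2 / ((s2 - s1) * (s2 - s3)) + s3 / ((s3 - s1) * (s3 - s2)) = 0 /\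
  / ((s1 - s2) * (s1 - s3)) + / ((s2 - s1) * (s2 - s3)) + / ((s3 - s1) * (s3 - s2)) = 0.
Proof. intros. split; field; repeat split; lra. Qed.

Lemma deriv_T_general b1 b0 g2 g0 (rt : R -> R * R * R) (Tf : R -> R) p0 s1 s2 s3 :
  (forall p s1 s2 s3, is_triple (bf b1 b0 p) (cf g2 g0 p) s1 s2 s3 -> rt p = (sqrt s1, sqrt s2, sqrt s3)) ->
  (forall p s1 s2 s3, is_triple (bf b1 b0 p) (cf g2 g0 p) s1 s2 s3 -> Tf p = 2 * (sqrt 2 * Ith s1 s2 s3)) ->
  is_triple (bf b1 b0 p0) (cf g2 g0 p0) s1 s2 s3 ->
  is_derive Tf p0 (2 * (sqrt 2 * RInt (Kd b1 b0 g2 rt p0) 0 (PI / 2))) /\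
  S1 rt p0 = s1 /\ S2 rt p0 = s2 /\ S3 rt p0 = s3.
Proof.
  intros Hrt HTf HT.
  destruct (S_eq _ _ _ _ _ Hrt _ _ _ _ HT) as (E1 & E2 & E3).
  split; [|auto].
  assert (HT': is_triple (bf b1 b0 p0) (cf g2 g0 p0) (S1 rt p0) (S2 rt p0) (S3 rt p0)) by
    (rewrite E1, E2, E3; auto).
  pose proof (Ith_deriv _ _ _ g0 _ Hrt p0 HT') as D.
  apply (is_derive_ext_loc (fun u => 2 * (sqrt 2 * Ith (S1 rt u) (S2 rt u) (S3 rt u)))).
  - destruct (good_loc _ _ _ _ _ Hrt _ _ _ _ HT) as [d Hd]. exists d. intros y Hy.
    symmetry. apply HTf. apply Hd. auto.
  - apply is_derive_scal. apply is_derive_scal. auto.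
Qed.

Lemma Kd_eq b1 b0 g2 rt p s1 s2 s3 : S1 rt p = s1 -> S2 rt p = s2 -> S3 rt p = s3 ->
  RInt (Kd b1 b0 g2 rt p) 0 (PI / 2) =
  RInt (fun t => - ((- (b1 * s3 - 2 * g2 * p) / dPc (bf b1 b0 p) s3)
                    - (- (b1 * s1 - 2 * g2 * p) / dPc (bf b1 b0 p) s1) * cos t ^ 2
                    - (- (b1 * s2 - 2 * g2 * p) / dPc (bf b1 b0 p) s2) * sin t ^ 2) *
     / (2 * (Dth s1 s2 s3 t * sqrt (Dth s1 s2 s3 t)))) 0 (PI / 2).
Proof.
  intros E1 E2 E3. apply RInt_ext. intros x _. unfold Kd, DD, dS. rewrite E1, E2, E3. reflexivity.
Qed.

Theorem proposition4 :
  forall J E : R, D1 J E ->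
    (exists dE : R, is_derive (fun e => T J e) E dE /\ dE > 0) /\
    (exists dJ : R, is_derive (fun j => T j E) J dJ /\ dJ < 0).
Proof.
  intros J E HD.
  assert (HJ: 0 < J) by (destruct HD as [[? ?] _]; lra).
  destruct (D1_triple J E HD) as (s1 & s2 & s3 & HT).
  pose proof HT as (h0 & h12 & h23 & _).
  destruct (triple_dP _ _ _ _ _ HT) as (D1' & D2' & D3').
  destruct (lagrange_id s1 s2 s3 h12 h23) as [L1 L2].
  assert (P1: 0 < (s1 - s2) * (s1 - s3)) by nra.
  assert (P2: (s2 - s1) * (s2 - s3) < 0) by nra.
  assert (P3: 0 < (s3 - s1) * (s3 - s2)) by nra.
  split.
  -
    set (rt := fun e => roots J e).
    assert (Hrt: forall p s1 s2 s3, is_triple (bf 4 0 p) (cf 0 (2 * J ^ 2) p) s1 s2 s3 ->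
       rt p = (sqrt s1, sqrt s2, sqrt s3)).
    { intros p a1 a2 a3 H. apply roots_eq. eapply is_triple_ext; [| |exact H]; unfold bf, cf; ring. }
    assert (HTf: forall p s1 s2 s3, is_triple (bf 4 0 p) (cf 0 (2 * J ^ 2) p) s1 s2 s3 ->
       T J p = 2 * (sqrt 2 * Ith s1 s2 s3)).
    { intros p a1 a2 a3 H. apply T_formula. eapply is_triple_ext; [| |exact H]; unfold bf, cf; ring. }
    assert (HT0: is_triple (bf 4 0 E) (cf 0 (2 * J ^ 2) E) s1 s2 s3).
    { eapply is_triple_ext; [| |exact HT]; unfold bf, cf; ring. }
    destruct (deriv_T_general 4 0 0 (2 * J ^ 2) rt (fun e => T J e) E s1 s2 s3 Hrt HTf HT0)
      as (Dv & E1 & E2 & E3).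
    eexists. split. exact Dv.
    assert (0 < sqrt 2) by (apply sqrt_lt_R0; lra).
    assert (0 < RInt (Kd 4 0 0 rt E) 0 (PI / 2)); [|nra].
    rewrite (Kd_eq _ _ _ _ _ _ _ _ E1 E2 E3).
    assert (D1'': dPc (bf 4 0 E) s1 = (s1 - s2) * (s1 - s3)) by (rewrite <- D1'; unfold bf; f_equal; ring).
    assert (D2'': dPc (bf 4 0 E) s2 = (s2 - s1) * (s2 - s3)) by (rewrite <- D2'; unfold bf; f_equal; ring).
    assert (D3'': dPc (bf 4 0 E) s3 = (s3 - s1) * (s3 - s2)) by (rewrite <- D3'; unfold bf; f_equal; ring).
    apply sign_main; auto; rewrite ?D1'', ?D2'', ?D3''.
    + replace (- (4 * s2 - 2 * 0 * E) / ((s2 - s1) * (s2 - s3)) - - (4 * s3 - 2 * 0 * E) / ((s3 - s1) * (s3 - s2)))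
        with (4 * (- (s2 / ((s2 - s1) * (s2 - s3))) + s3 / ((s3 - s1) * (s3 - s2)))) by (field; lra).
      assert (0 < - (s2 / ((s2 - s1) * (s2 - s3)))).
      { unfold Rdiv. assert (/ ((s2 - s1) * (s2 - s3)) < 0) by (apply Rinv_lt_0_compat; lra). nra. }
      assert (0 < s3 / ((s3 - s1) * (s3 - s2))) by (apply Rdiv_lt_0_compat; lra).
      lra.
    + replace (- (4 * s1 - 2 * 0 * E) / ((s1 - s2) * (s1 - s3)) + - (4 * s2 - 2 * 0 * E) / ((s2 - s1) * (s2 - s3)) -
         2 * (- (4 * s3 - 2 * 0 * E) / ((s3 - s1) * (s3 - s2))))
        with (-4 * (s1 / ((s1 - s2) * (s1 - s3)) + s2 / ((s2 - s1) * (s2 - s3)) + s3 / ((s3 - s1) * (s3 - s2)))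
              + 12 * (s3 / ((s3 - s1) * (s3 - s2)))) by (field; lra).
      rewrite L1.
      assert (0 < s3 / ((s3 - s1) * (s3 - s2))) by (apply Rdiv_lt_0_compat; lra).
      lra.
  -
    set (rt := fun j => roots j E).
    assert (Hrt: forall p s1 s2 s3, is_triple (bf 0 (4 * E) p) (cf 2 0 p) s1 s2 s3 ->
       rt p = (sqrt s1, sqrt s2, sqrt s3)).
    { intros p a1 a2 a3 H. apply roots_eq. eapply is_triple_ext; [| |exact H]; unfold bf, cf; ring. }
    assert (HTf: forall p s1 s2 s3, is_triple (bf 0 (4 * E) p) (cf 2 0 p) s1 s2 s3 ->
       T p E = 2 * (sqrt 2 * Ith s1 s2 s3)).
    { intros p a1 a2 a3 H. apply T_formula. eapply is_triple_ext; [| |exact H]; unfold bf, cf; ring. }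
    assert (HT0: is_triple (bf 0 (4 * E) J) (cf 2 0 J) s1 s2 s3).
    { eapply is_triple_ext; [| |exact HT]; unfold bf, cf; ring. }
    destruct (deriv_T_general 0 (4 * E) 2 0 rt (fun j => T j E) J s1 s2 s3 Hrt HTf HT0)
      as (Dv & E1 & E2 & E3).
    eexists. split. exact Dv.
    assert (0 < sqrt 2) by (apply sqrt_lt_R0; lra).
    assert (RInt (Kd 0 (4 * E) 2 rt J) 0 (PI / 2) < 0); [|nra].
    rewrite (Kd_eq _ _ _ _ _ _ _ _ E1 E2 E3).
    assert (D1'': dPc (bf 0 (4 * E) J) s1 = (s1 - s2) * (s1 - s3)) by (rewrite <- D1'; unfold bf; f_equal; ring).
    assert (D2'': dPc (bf 0 (4 * E) J) s2 = (s2 - s1) * (s2 - s3)) by (rewrite <- D2'; unfold bf; f_equal; ring).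
    assert (D3'': dPc (bf 0 (4 * E) J) s3 = (s3 - s1) * (s3 - s2)) by (rewrite <- D3'; unfold bf; f_equal; ring).
    apply sign_neg; auto; rewrite ?D1'', ?D2'', ?D3''.
    + replace (- (0 * s3 - 2 * 2 * J) / ((s3 - s1) * (s3 - s2)) -
        - (0 * s2 - 2 * 2 * J) / ((s2 - s1) * (s2 - s3)))
        with (4 * J * (/ ((s3 - s1) * (s3 - s2)) - / ((s2 - s1) * (s2 - s3)))) by (field; lra).
      assert (/ ((s2 - s1) * (s2 - s3)) < 0) by (apply Rinv_lt_0_compat; lra).
      assert (0 < / ((s3 - s1) * (s3 - s2))) by (apply Rinv_0_lt_compat; lra).
      apply Rmult_lt_0_compat; lra.
    + replace (2 * (- (0 * s3 - 2 * 2 * J) / ((s3 - s1) * (s3 - s2))) -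
        - (0 * s1 - 2 * 2 * J) / ((s1 - s2) * (s1 - s3)) -
        - (0 * s2 - 2 * 2 * J) / ((s2 - s1) * (s2 - s3)))
        with (- 4 * J * (/ ((s1 - s2) * (s1 - s3)) + / ((s2 - s1) * (s2 - s3)) + / ((s3 - s1) * (s3 - s2)))
              + 12 * J * / ((s3 - s1) * (s3 - s2))) by (field; lra).
      rewrite L2.
      assert (0 < / ((s3 - s1) * (s3 - s2))) by (apply Rinv_0_lt_compat; lra).
      assert (0 < 12 * J * / ((s3 - s1) * (s3 - s2))) by (apply Rmult_lt_0_compat; lra).
      lra.
Qed.
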